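(* Let $H$ be a connected graph, $G_n$ a graph, $p_n\in(0,1)$, and $$\beta_H(p_n)=\sum_{K=1}^{|V(H)|}p_n^{2|V(H)|-K}\sum_{A\subset V(G_n):|A|=K}t_H(A)^2.$$ Then $$\frac{(1-p_n)\beta_H(p_n)}{2^{|V(H)|}-1}\le\mathrm{Var}[T(H,G_n)]\le\beta_H(p_n).$$
   Context: $G_n$ is a simple labeled graph on $V(G_n)=\{1,\dots,|V(G_n)|\}$ with adjacency $(a_{ij})$; $H=(V(H),E(H))$ with $|Aut(H)|$ automorphisms. $V(G_n)_k$ is the set of $k$-tuples of distinct vertices, $\bar{\mathbf s}$ the set of entries. $M_H(\mathbf s)=\prod_{(i,j)\in E(H)}a_{s_is_j}$, $t_H(A)=\frac1{|Aut(H)|}\sum_{\mathbf s\in V(G_n)_{|V(H)|}:\bar{\mathbf s}\supseteq A}M_H(\mathbf s)$. $\{X_v\}$ i.i.d. Bernoulli$(p_n)$, $X_{\mathbf s}=\prod_uX_{s_u}$, $T(H,G_n)=\frac1{|Aut(H)|}\sum_{\mathbf s}M_H(\mathbf s)X_{\mathbf s}$. *)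

(* Defs.v *)
From HB Require Import structures.
From mathcomp Require Import all_boot all_order all_algebra all_fingroup.
Set Implicit Arguments. Unset Strict Implicit. Unset Printing Implicit Defensive.
Import Order.TTheory GRing.Theory Num.Theory.
Local Open Scope ring_scope.

Definition simple_graph (T : finType) (e : rel T) : Prop :=
  symmetric e /\ irreflexive e.

Definition connected_graph (T : finType) (e : rel T) : Prop :=
  forall x y : T, connect e x y.

Definition autH (h : nat) (eH : rel 'I_h) : nat :=
  #|[set s : {perm 'I_h} | [forall i, forall j, eH (s i) (s j) == eH i j]]|.

Definition M_H (R : nzRingType) (h N : nat) (eH : rel 'I_h) (eG : rel 'I_N)
  (s : {ffun 'I_h -> 'I_N}) : R :=
  \prod_(i : 'I_h) \prod_(j : 'I_h | (i < j)%N && eH i j) (eG (s i) (s j))%:R.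

(* t_H(A) : s ranges over |V(H)|-tuples of distinct vertices (injective maps)
   whose set of entries contains A. *)
Definition t_H (R : fieldType) (h N : nat) (eH : rel 'I_h) (eG : rel 'I_N)
  (A : {set 'I_N}) : R :=
  (autH eH)%:R^-1 *
  \sum_(s : {ffun 'I_h -> 'I_N} | injectiveb s && (A \subset [set s i | i : 'I_h]))
     M_H R eH eG s.

Definition bern_prob (R : nzRingType) (N : nat) (p : R)
  (x : {ffun 'I_N -> bool}) : R :=
  \prod_(v : 'I_N) (if x v then p else 1 - p).

Definition expect (R : nzRingType) (N : nat) (p : R)
  (f : {ffun 'I_N -> bool} -> R) : R :=
  \sum_(x : {ffun 'I_N -> bool}) bern_prob p x * f x.

Definition variance (R : nzRingType) (N : nat) (p : R)
  (f : {ffun 'I_N -> bool} -> R) : R :=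
  expect p (fun x => f x ^+ 2) - (expect p f) ^+ 2.

Definition X_s (R : nzRingType) (h N : nat) (s : {ffun 'I_h -> 'I_N})
  (x : {ffun 'I_N -> bool}) : R :=
  \prod_(u : 'I_h) (x (s u))%:R.

Definition T_HG (R : fieldType) (h N : nat) (eH : rel 'I_h) (eG : rel 'I_N)
  (x : {ffun 'I_N -> bool}) : R :=
  (autH eH)%:R^-1 *
  \sum_(s : {ffun 'I_h -> 'I_N} | injectiveb s) M_H R eH eG s * X_s R s x.

Definition beta_H (R : fieldType) (h N : nat) (eH : rel 'I_h) (eG : rel 'I_N)
  (p : R) : R :=
  \sum_(1 <= K < h.+1)
     p ^+ (2 * h - K) * \sum_(A : {set 'I_N} | #|A| == K) (t_H R eH eG A) ^+ 2.

(* Main.v *)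
Require Import Defs.
From HB Require Import structures.
From mathcomp Require Import all_boot all_order all_algebra all_fingroup.
From mathcomp Require Import ring.
Import Order.TTheory GRing.Theory Num.Theory.
Set Implicit Arguments. Unset Strict Implicit. Unset Printing Implicit Defensive.
Local Open Scope ring_scope.

Section Helpers.
Variable R : realFieldType.

Lemma prod_bool (I : finType) (P : pred I) (b : I -> bool) :
  \prod_(i | P i) ((b i)%:R : R) = ([forall i, P i ==> b i])%:R.
Proof.
case: (boolP [forall i, P i ==> b i]) => [/forallP H | /forallPn [i]].
  by rewrite big1 // => i Pi; have := H i; rewrite Pi /= => ->.
by rewrite negb_imply => /andP [Pi nbi]; rewrite (bigD1 i) //= (negbTE nbi) mul0r.
Qed.

Definition ind N (S : {set 'I_N}) (x : {ffun 'I_N -> bool}) : R :=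
  (S \subset [set v | x v])%:R.

Lemma ind_prod N (S : {set 'I_N}) x : ind S x = \prod_(v in S) (x v)%:R.
Proof.
rewrite prod_bool /ind; congr ((nat_of_bool _)%:R).
idtac.
apply/idP/idP => [/subsetP H | /forallP H]; [apply/forallP => v | apply/subsetP => v vS].
  by apply/implyP => vS; have := H v vS; rewrite inE.
by rewrite inE; exact: (implyP (H v)).
Qed.

Lemma ind_mul N (S S' : {set 'I_N}) x : ind S x * ind S' x = ind (S :|: S') x.
Proof. by rewrite /ind -natrM mulnb subUset. Qed.

Lemma E_ind N (p : R) (S : {set 'I_N}) : expect p (ind S) = p ^+ #|S|.
Proof.
rewrite /expect.
under eq_bigr => x _ do rewrite ind_prod /bern_prob (big_mkcond (fun v => v \in S)) -big_split /=.
rewrite -(bigA_distr_bigA (fun v b => (if b then p else 1 - p) * (if v \in S then (b%:R : R) else 1))).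
under eq_bigr => v _ do rewrite big_bool /=.
rewrite -prodr_const [RHS]big_mkcond /=.
apply: eq_bigr => v _; case: (v \in S).
  by rewrite mulr1 mulr0 addr0.
by rewrite !mulr1 addrC subrK.
Qed.

End Helpers.

Section Main.
Variable R : realFieldType.
Variables (h N : nat) (eH : rel 'I_h) (eG : rel 'I_N) (p : R).
Local Notation FF := {ffun 'I_h -> 'I_N}.

Definition cc (s : {ffun 'I_h -> 'I_N}) : R := (autH eH)%:R^-1 * M_H R eH eG s.
Definition imS (s : {ffun 'I_h -> 'I_N}) : {set 'I_N} := [set s i | i : 'I_h].

Lemma card_imS (s : {ffun 'I_h -> 'I_N}) : injectiveb s -> #|imS s| = h.
Proof. by move=> /injectiveP inj; rewrite /imS card_imset // card_ord. Qed.

Lemma expect_ext (f g : {ffun 'I_N -> bool} -> R) : f =1 g -> expect p f = expect p g.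
Proof. by move=> fg; apply: eq_bigr => x _; rewrite fg. Qed.

Lemma expect_sum (I : finType) (P : pred I) (F : I -> {ffun 'I_N -> bool} -> R) :
  expect p (fun x => \sum_(i | P i) F i x) = \sum_(i | P i) expect p (F i).
Proof. by rewrite /expect; under eq_bigr do rewrite mulr_sumr; exact: exchange_big. Qed.

Lemma expect_scale (a : R) (f : {ffun 'I_N -> bool} -> R) : expect p (fun x => a * f x) = a * expect p f.
Proof. by rewrite /expect mulr_sumr; apply: eq_bigr => x _; rewrite mulrCA. Qed.

Lemma T_eq x : T_HG R eH eG x = \sum_(s : FF | injectiveb s) cc s * ind R (imS s) x.
Proof.
rewrite /T_HG mulr_sumr; apply: eq_bigr => s /injectiveP inj.
rewrite mulrA ind_prod /X_s /imS big_imset //; by move=> i j _ _; apply: inj.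
Qed.

Lemma ET : expect p (T_HG R eH eG) = \sum_(s : FF | injectiveb s) cc s * p ^+ h.
Proof.
rewrite (expect_ext (T_eq)) expect_sum; apply: eq_bigr => s inj.
by rewrite expect_scale E_ind card_imS.
Qed.

Lemma ET2 : expect p (fun x => T_HG R eH eG x ^+ 2) =
  \sum_(s : FF | injectiveb s) \sum_(s' : FF | injectiveb s') cc s * cc s' * p ^+ #|imS s :|: imS s'|.
Proof.
rewrite (expect_ext (g := fun x => \sum_(s : FF | injectiveb s) \sum_(s' : FF | injectiveb s')
   cc s * cc s' * ind R (imS s :|: imS s') x)).
  rewrite expect_sum; apply: eq_bigr => s _; rewrite expect_sum; apply: eq_bigr => s' _.
  by rewrite expect_scale E_ind.
move=> x; rewrite T_eq expr2 big_distrlr; apply: eq_bigr => s _; apply: eq_bigr => s' _.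
by rewrite -ind_mul /= mulrACA.
Qed.

Lemma var_eq : variance p (T_HG R eH eG) =
  \sum_(s : FF | injectiveb s) \sum_(s' : FF | injectiveb s')
     cc s * cc s' * (p ^+ #|imS s :|: imS s'| - p ^+ h * p ^+ h).
Proof.
rewrite /variance ET2 ET expr2 big_distrlr -sumrB; apply: eq_bigr => s _.
rewrite -sumrB; apply: eq_bigr => s' _.
by rewrite /= mulrBr [X in _ - X]mulrACA.
Qed.

Lemma tH_eq A : t_H R eH eG A = \sum_(s : FF | injectiveb s) cc s * (A \subset imS s)%:R.
Proof.
rewrite /t_H big_mkcondr mulr_sumr; apply: eq_bigr => s _ /=.
by rewrite /imS; case: (A \subset _); rewrite ?mulr1 ?mulr0.
Qed.

Lemma tH2 A : t_H R eH eG A ^+ 2 = \sum_(s : FF | injectiveb s) \sum_(s' : FF | injectiveb s')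
   cc s * cc s' * (A \subset imS s :&: imS s')%:R.
Proof.
rewrite tH_eq expr2 big_distrlr; apply: eq_bigr => s _; apply: eq_bigr => s' _.
by rewrite /= mulrACA -natrM mulnb subsetI.
Qed.

Definition gK (C : {set 'I_N}) : R :=
  \sum_(1 <= K < h.+1) \sum_(A : {set 'I_N} | #|A| == K) p ^+ (2 * h - K) * (A \subset C)%:R.

Lemma beta_eq1 : beta_H eH eG p = \sum_(s : FF | injectiveb s) \sum_(s' : FF | injectiveb s')
   cc s * cc s' * gK (imS s :&: imS s').
Proof.
rewrite /beta_H.
under eq_bigr => K _ do (rewrite mulr_sumr; under eq_bigr => A _ do rewrite tH2 mulr_sumr; rewrite exchange_big).
rewrite exchange_big; apply: eq_bigr => s _.
under eq_bigr => K _ do (under eq_bigr => A _ do rewrite mulr_sumr; rewrite exchange_big).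
rewrite exchange_big; apply: eq_bigr => s' _.
rewrite /gK mulr_sumr; apply: eq_bigr => K _; rewrite mulr_sumr; apply: eq_bigr => A _.
by rewrite mulrCA.
Qed.

Lemma sum_card (F : {set 'I_N} -> R) :
  \sum_(1 <= K < h.+1) \sum_(A : {set 'I_N} | #|A| == K) F A = \sum_(A : {set 'I_N} | (0 < #|A| <= h)%N) F A.
Proof.
under eq_bigr do rewrite big_mkcond.
rewrite exchange_big [RHS]big_mkcond; apply: eq_bigr => A _ /=.
case: (boolP (0 < #|A| <= h)%N) => H.
  rewrite (bigD1_seq #|A|) ?mem_index_iota ?ltnS ?iota_uniq //= eqxx big1 ?addr0 // => K.
  by rewrite eq_sym => /negbTE ->.
rewrite big1_seq // => K; rewrite mem_index_iota ltnS; case: eqP => // eK /= Hk.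
by rewrite eK Hk in H.
Qed.

Definition g (C : {set 'I_N}) : R :=
  \sum_(A : {set 'I_N} | (A != set0) && (A \subset C)) p ^+ (2 * h - #|A|).

Lemma gK_eq (C : {set 'I_N}) : (#|C| <= h)%N -> gK C = g C.
Proof.
move=> hC; rewrite /gK.
rewrite (eq_bigr (fun K => \sum_(A : {set 'I_N} | #|A| == K) p ^+ (2 * h - #|A|) * (A \subset C)%:R)); last first.
  by move=> K _; apply: eq_bigr => A /eqP ->.
rewrite sum_card /g [LHS]big_mkcond [RHS]big_mkcond; apply: eq_bigr => A _ /=.
case: (boolP (A \subset C)) => sAC; rewrite ?andbT ?andbF ?mulr1 ?mulr0.
  have Ah : (#|A| <= h)%N by apply: leq_trans (subset_leq_card sAC) hC.
  by rewrite Ah andbT card_gt0.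
by case: ifP.
Qed.

Lemma g_ge0 C : 0 <= p -> 0 <= g C.
Proof. by move=> p0; apply: sumr_ge0 => A _; apply: exprn_ge0. Qed.

Lemma g_lb (C : {set 'I_N}) : (0 < #|C|)%N -> 0 <= p -> p ^+ (2 * h - #|C|) <= g C.
Proof.
move=> k0 p0; rewrite /g (bigD1 C) /=; last by rewrite -card_gt0 k0 subxx.
by rewrite lerDl; apply: sumr_ge0 => A _; apply: exprn_ge0.
Qed.

Lemma g_ub (C : {set 'I_N}) : 0 <= p -> p <= 1 ->
  g C <= (2 ^ #|C| - 1)%N%:R * p ^+ (2 * h - #|C|).
Proof.
move=> p0 p1; rewrite /g.
apply: le_trans (_ : \sum_(A : {set 'I_N} | (A != set0) && (A \subset C)) p ^+ (2 * h - #|C|) <= _).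
  apply: ler_sum => A /andP [_ sAC]; apply: ler_wiXn2l => //.
  by apply: leq_sub2l; apply: subset_leq_card.
rewrite (eq_bigl (fun A => A \in powerset C :\ set0)); last first.
  by move=> A; rewrite in_setD1 powersetE.
rewrite sumr_const -[X in X <= _]mulr_natl; apply: ler_wpM2r; first exact: exprn_ge0.
rewrite ler_nat.
have := cardsD1 set0 (powerset C); rewrite powersetE sub0set card_powerset /= => ->.
by rewrite add1n subn1 /=.
Qed.

Lemma pair_bounds (C : {set 'I_N}) : (#|C| <= h)%N -> 0 < p -> p < 1 ->
  (1 - p) * g C / (2 ^+ h - 1) <= p ^+ (2 * h - #|C|) - p ^+ h * p ^+ h /\
  p ^+ (2 * h - #|C|) - p ^+ h * p ^+ h <= g C.
Proof.
move=> kh p0' p1'; have p0 := ltW p0'; have p1 := ltW p1'.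
set k := #|C| in kh *.
have ehh : p ^+ h * p ^+ h = p ^+ (2 * h - k) * p ^+ k.
  have k2h : (k <= 2 * h)%N by rewrite mul2n -addnn; apply: leq_trans kh (leq_addr _ _).
  by rewrite -!exprD subnK // mul2n addnn.
have hg := g_ub C p0 p1; have hg0 := g_ge0 C p0.
rewrite ehh -{1 3}(mulr1 (p ^+ (2 * h - k))) -mulrBr.
case: (posnP k) => [k0 | kpos].
  rewrite k0 expr0 subrr mulr0 in hg *.
  have -> : g C = 0.
  by apply/eqP; rewrite eq_le hg0 andbT; move: hg; rewrite -/k k0 expn0 subnn mul0r.
  by rewrite mulr0 !mul0r; split.
split; last first.
  apply: le_trans (g_lb kpos p0); rewrite -[X in _ <= X]mulr1 ler_wpM2l ?exprn_ge0 //.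
  by rewrite lerBlDr lerDl exprn_ge0.
have hpos : (0 < h)%N by apply: leq_trans kpos kh.
have eD : (2 ^+ h - 1 : R) = (2 ^ h - 1)%N%:R by rewrite natrB ?expn_gt0 // natrX.
have h2 : (2 <= 2 ^ h)%N by rewrite -{1}(expn1 2) leq_pexp2l.
have D0 : 0 < (2 ^+ h - 1 : R) by rewrite eD ltr0n subn_gt0.
have kk : (2 ^ k - 1 <= 2 ^ h - 1)%N by rewrite leq_sub2r // leq_pexp2l.
have pk : p ^+ k <= p by rewrite -{2}(expr1 p); apply: ler_wiXn2l.
rewrite ler_pdivrMr //.
apply: le_trans (_ : (1 - p) * ((2 ^ k - 1)%N%:R * p ^+ (2 * h - k)) <= _).
  by apply: ler_wpM2l; [rewrite subr_ge0 | rewrite -/k in hg].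
rewrite (_ : _ * (1 - p ^+ k) * _ = ((1 - p ^+ k) * (2 ^+ h - 1)) * p ^+ (2 * h - k)); last by ring.
rewrite mulrA; apply: ler_wpM2r; first exact: exprn_ge0.
apply: ler_pM; first by rewrite subr_ge0.
  exact: ler0n.
  by apply: lerB.
by rewrite eD ler_nat.
Qed.

Lemma cc_ge0 (s : FF) : 0 <= cc s.
Proof.
rewrite /cc mulr_ge0 ?invr_ge0 ?ler0n //.
by apply: prodr_ge0 => i _; apply: prodr_ge0 => j _; apply: ler0n.
Qed.

Lemma pair_card (s s' : FF) : injectiveb s -> injectiveb s' ->
  (#|imS s :&: imS s'| <= h)%N /\ #|imS s :|: imS s'| = (2 * h - #|imS s :&: imS s'|)%N.
Proof.
move=> i1 i2; split.
  by rewrite -(card_imS i1); apply: subset_leq_card; apply: subsetIl.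
by rewrite cardsU (card_imS i1) (card_imS i2) mul2n addnn.
Qed.

End Main.

Theorem lemma5p1 (R : realFieldType) (h N : nat) (eH : rel 'I_h) (eG : rel 'I_N)
  (p : R) :
  simple_graph eH -> connected_graph eH -> simple_graph eG ->
  0 < p < 1 ->
  (1 - p) * beta_H eH eG p / (2 ^+ h - 1) <= variance p (T_HG R eH eG)
  /\ variance p (T_HG R eH eG) <= beta_H eH eG p.
Proof.
move=> _ _ _ /andP [p0 p1].
rewrite var_eq beta_eq1; split.
  rewrite mulr_sumr mulr_suml; apply: ler_sum => s i1.
  rewrite mulr_sumr mulr_suml; apply: ler_sum => s' i2.
  have [hC eU] := pair_card i1 i2.
  have [lb _] := pair_bounds hC p0 p1.
  rewrite eU gK_eq //.
  rewrite (_ : _ / _ = @cc R h N eH eG s * @cc R h N eH eG s' * ((1 - p) * g h p (imS s :&: imS s') / (2 ^+ h - 1))); last by ring.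
  by apply: ler_wpM2l => //; apply: mulr_ge0; apply: cc_ge0.
apply: ler_sum => s i1; apply: ler_sum => s' i2.
have [hC eU] := pair_card i1 i2.
have [_ ub] := pair_bounds hC p0 p1.
rewrite eU gK_eq //.
by apply: ler_wpM2l => //; apply: mulr_ge0; apply: cc_ge0.
Qed.
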